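(* Let $G=(V,E)$ be an undirected graph having a strongly connected orientation. A strongly connected orientation of $G$ is decreasingly minimal among the strongly connected orientations of $G$ if and only if it is increasingly maximal among them.
   Context: An orientation's in-degree vector is $(\varrho_D(v))_{v\in V}$, $\varrho_D(v)$ the number of arcs with head $v$. Decreasingly minimal: largest in-degree as small as possible within the class, then second largest, etc. Increasingly maximal: smallest in-degree as large as possible within the class, then second smallest, etc. *)

(* Defs.v *)
From mathcomp Require Import all_boot.
Set Implicit Arguments. Unset Strict Implicit. Unset Printing Implicit Defensive.

(* Parallel edges are
   allowed.  An orientation D assigns to each edge a direction: if [D e] is
   true the edge is oriented from (ends e).1 to (ends e).2, otherwise from
   (ends e).2 to (ends e).1. *)

Section Orientations.
Variables (V E : finType) (ends : E -> V * V).

Definition orientation := {ffun E -> bool}.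

Definition otail (D : orientation) (e : E) : V :=
  if D e then (ends e).1 else (ends e).2.
Definition ohead (D : orientation) (e : E) : V :=
  if D e then (ends e).2 else (ends e).1.

Definition arc (D : orientation) : rel V :=
  fun x y => [exists e, (otail D e == x) && (ohead D e == y)].

Definition strongly_connected (D : orientation) : Prop :=
  forall u v : V, connect (arc D) u v.

Definition indeg (D : orientation) (v : V) : nat :=
  #|[set e | ohead D e == v]|.

Definition dec_vec (D : orientation) : seq nat :=
  sort geq [seq indeg D v | v <- enum V].
Definition inc_vec (D : orientation) : seq nat :=
  sort leq [seq indeg D v | v <- enum V].

Fixpoint lexlt (s t : seq nat) : bool :=
  match s, t with
  | x :: s', y :: t' => (x < y) || ((x == y) && lexlt s' t')
  | _, _ => false
  end.

Definition dec_min_sc (D : orientation) : Prop :=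
  strongly_connected D /\
  forall D' : orientation, strongly_connected D' -> ~~ lexlt (dec_vec D') (dec_vec D).

Definition inc_max_sc (D : orientation) : Prop :=
  strongly_connected D /\
  forall D' : orientation, strongly_connected D' -> ~~ lexlt (inc_vec D) (inc_vec D').

End Orientations.

(* Main.v *)
Require Import Defs.
From mathcomp Require Import all_boot.
From mathcomp Require Import fingroup perm zify.
Set Implicit Arguments. Unset Strict Implicit. Unset Printing Implicit Defensive.


Lemma lexlt_irr s : ~~ lexlt s s.
Proof. by elim: s => //= x s IH; rewrite ltnn eqxx. Qed.

Lemma lexlt_trans s t u : lexlt s t -> lexlt t u -> lexlt s u.
Proof.
elim: s t u => [|x s IH] [|y t] [|z u] //=.
case/orP => [xy|/andP [/eqP <- st]]; case/orP => [yz|/andP [/eqP <- tu]].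
- by rewrite (ltn_trans xy yz).
- by rewrite xy.
- by rewrite yz.
- by rewrite eqxx (IH _ _ st tu) orbT.
Qed.

Lemma count_lex_dec s t j : sorted geq s -> sorted geq t -> size s = size t ->
  (forall j', j < j' -> count (leq j') s = count (leq j') t) ->
  count (leq j) s < count (leq j) t -> lexlt s t.
Proof.
elim: s t => [|x s IH] [|y t] //=.
move=> ss st [sz] H lt.
have geq_tr : transitive geq by move=> a b c /= h1 h2; apply: leq_trans h1.
have Z : forall k, y < k -> count (leq k) t = 0.
  move=> k yk; apply/eqP; rewrite -leqn0 leqNgt -has_count; apply/hasPn => n nin.
  have := order_path_min geq_tr st => /allP /(_ n nin) /= ny.
  by rewrite -ltnNge; apply: leq_ltn_trans yk.
case: (ltngtP x y) => [xy|xy|exy] //.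
- exfalso; case: (ltnP j x) => jx.
    have := H x jx; rewrite /= leqnn (Z x xy) leqNgt xy /=; lia.
  have yj : y < j by apply: leq_trans xy jx.
  move: lt; rewrite /= (Z j yj) [j <= y]leqNgt yj /=; lia.
- rewrite /=; apply: IH => //.
  + exact: path_sorted ss.
  + exact: path_sorted st.
  + by move=> j' jj'; have := H j' jj'; rewrite exy; lia.
  + by move: lt; rewrite exy; lia.
Qed.

Lemma count_lex_inc s t j : sorted leq s -> sorted leq t -> size s = size t ->
  (forall j', j' < j -> count (geq j') s = count (geq j') t) ->
  count (geq j) t < count (geq j) s -> lexlt s t.
Proof.
elim: s t => [|x s IH] [|y t] //=.
move=> ss st [sz] H lt.
have Z : forall k, k < x -> count (geq k) s = 0.
  move=> k kx; apply/eqP; rewrite -leqn0 leqNgt -has_count; apply/hasPn => n nin.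
  have := order_path_min leq_trans ss => /allP /(_ n nin) /= xn.
  by rewrite /= -ltnNge; apply: leq_trans kx xn.
case: (ltngtP x y) => [xy|xy|exy] //.
- exfalso; case: (ltnP y j) => yj.
    have := H y yj; rewrite /= leqnn (Z y xy) [x <= y]leqNgt xy /=; lia.
  have jx : j < x by apply: leq_ltn_trans yj xy.
  move: lt; rewrite /= (Z j jx) [x <= j]leqNgt jx /=; lia.
- rewrite /=; apply: IH => //.
  + exact: path_sorted ss.
  + exact: path_sorted st.
  + by move=> j' jj'; have := H j' jj'; rewrite exy; lia.
  + by move: lt; rewrite exy; lia.
Qed.

Section Aux.
Variables (V E : finType) (ends : E -> V * V).
Implicit Types (D : orientation E) (A : {set V}).

Definition delta D A : nat := \sum_(e : E) ((otail ends D e \in A) && (Defs.ohead ends D e \notin A)).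
Definition tA A : nat := \sum_(e : E) (((ends e).1 \in A) || ((ends e).2 \in A)).
Definition X D A : nat := \sum_(v in A) indeg ends D v.

Lemma indeg_sum D v : indeg ends D v = \sum_(e : E) (Defs.ohead ends D e == v).
Proof.
rewrite /indeg -sum1_card big_mkcond /=; apply: eq_bigr => e _.
by rewrite inE; case: (_ == _).
Qed.

Lemma sum_eq_in (h : V) A : \sum_(v in A) (h == v) = (h \in A).
Proof.
case hA: (h \in A).
  rewrite (bigD1 h) //= eqxx big1 // => v /andP [_ hv].
  by rewrite eq_sym (negbTE hv).
by rewrite big1 // => v vA; case: eqP => // hv; rewrite hv vA in hA.
Qed.

Lemma X_delta D A : X D A + delta D A = tA A.
Proof.
rewrite /X (eq_bigr _ (fun v _ => indeg_sum D v)) exchange_big /=.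
rewrite /delta /tA -big_split /=; apply: eq_bigr => e _.
rewrite sum_eq_in /otail /Defs.ohead; case: (D e);
by case: ((ends e).1 \in A); case: ((ends e).2 \in A).
Qed.

Lemma delta_setT D : delta D setT = 0.
Proof. by rewrite /delta big1 // => e _; rewrite !inE andbF. Qed.

Lemma X_setT D D' : X D setT = X D' setT.
Proof.
have h1 := X_delta D setT; have h2 := X_delta D' setT.
rewrite !delta_setT !addn0 in h1 h2; by rewrite h1 h2.
Qed.

Lemma delta_sub D A B :
  delta D (A :|: B) + delta D (A :&: B) <= delta D A + delta D B.
Proof.
rewrite /delta -!big_split /=; apply: leq_sum => e _.
rewrite !inE.
by case: (otail ends D e \in A); case: (otail ends D e \in B);
   case: (Defs.ohead ends D e \in A); case: (Defs.ohead ends D e \in B).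
Qed.

Lemma sc_delta D A : strongly_connected ends D -> A != set0 -> A != setT ->
  0 < delta D A.
Proof.
move=> sc /set0Pn [u uA] /eqP AT.
have [v vA] : exists v, v \notin A.
  apply/existsP; apply: contraT; rewrite negb_exists => /forallP H.
  have: A = setT by apply/setP => v; rewrite inE; move: (H v); rewrite negbK.
  by move/AT.
rewrite lt0n; apply: contraNN vA => /eqP d0.
have cl : forall x y, Defs.arc ends D x y -> x \in A -> y \in A.
  move=> x y /existsP [e /andP [/eqP tx /eqP hy]] xA.
  apply: contraT => yA.
  move: d0; rewrite /delta (bigD1 e) //= => /eqP; rewrite addn_eq0 => /andP [].
  by rewrite tx hy xA yA.
have := sc u v; case/connectP => p pp ->.
elim: p u uA pp => //= w p IH u uA /andP [auw pp].
exact: (IH w (cl _ _ auw uA) pp).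
Qed.

Lemma delta_sc D : (forall A, A != set0 -> A != setT -> 0 < delta D A) ->
  strongly_connected ends D.
Proof.
move=> H u v; apply: contraT => nc.
pose A := [set w | connect (Defs.arc ends D) u w].
have uA : u \in A by rewrite inE connect0.
have AT : A != setT.
  apply: contraNneq nc => AT; have : v \in A by rewrite AT inE.
  by rewrite inE.
have := H A (introT (set0Pn _) (ex_intro _ u uA)) AT.
rewrite /delta big1 // => e _; case: andP => // [[tA hA]]; exfalso.
move: hA; rewrite inE => /negP; apply.
apply: connect_trans (_ : connect _ u (otail ends D e)) _.
  by move: tA; rewrite inE.
apply: connect1; apply/existsP; exists e; by rewrite !eqxx.
Qed.

Definition flip D e0 : orientation E := [ffun e => if e == e0 then ~~ D e else D e].

Lemma flip_indeg D e0 v :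
  indeg ends (flip D e0) v + (v == Defs.ohead ends D e0) =
  indeg ends D v + (v == otail ends D e0).
Proof.
rewrite !indeg_sum (bigD1 e0) //= [in RHS](bigD1 e0) //=.
have -> : \sum_(i | i != e0) (Defs.ohead ends (flip D e0) i == v) =
          \sum_(i | i != e0) (Defs.ohead ends D i == v).
  by apply: eq_bigr => i ie; rewrite /Defs.ohead ffunE (negbTE ie).
rewrite /otail /Defs.ohead ffunE eqxx; case: (D e0) => /=; rewrite ![v == _]eq_sym; lia.
Qed.

Lemma realize p : forall b D, path (Defs.arc ends D) b p -> uniq (b :: p) ->
  exists D'', forall v, indeg ends D'' v + (v == last b p) = indeg ends D v + (v == b).
Proof.
elim: p => [|c p IH] b D /=.
  by move=> _ _; exists D.
case/andP => /existsP [e /andP [/eqP te /eqP he]] pp /andP [bn un].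
have pp1 : path (Defs.arc ends (flip D e)) c p.
  apply: (@sub_in_path _ (predC1 b)) pp; last first.
    rewrite /=; apply/andP; split; first by apply: contraNneq bn => ->; rewrite inE eqxx.
    apply/allP => w wp /=; apply: contraNneq bn => <-; by rewrite inE wp orbT.
  move=> x y /= xb yb /existsP [e' /andP [tx hy]]; apply/existsP; exists e'.
  have ee : e' != e by apply: contraNneq xb => ee; move: tx; rewrite ee te eq_sym.
  by rewrite /otail /Defs.ohead ffunE (negbTE ee); rewrite /otail /Defs.ohead in tx hy; rewrite tx hy.
have [D'' HD] := IH c _ pp1 un.
exists D'' => v; have := HD v; have := flip_indeg D e v; rewrite te he; lia.
Qed.

Lemma sum_step (D D'' : orientation E) a b A :
  (forall v, indeg ends D'' v + (v == a) = indeg ends D v + (v == b)) ->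
  X D'' A + (a \in A) = X D A + (b \in A).
Proof.
move=> H; rewrite -!sum_eq_in /X -!big_split /=; apply: eq_bigr => v _.
by rewrite eq_sym [b == v]eq_sym H.
Qed.

Lemma step_sc D a b : strongly_connected ends D ->
  (forall A, b \in A -> a \notin A -> 1 < delta D A) ->
  exists D'', strongly_connected ends D'' /\
    forall v, indeg ends D'' v + (v == a) = indeg ends D v + (v == b).
Proof.
move=> sc H; have := sc b a; case/connectP => p pp ea.
move: ea; case: (shortenP pp) => p' pp' up' _ ea.
have [D'' HD] := realize pp' up'; rewrite -ea in HD.
exists D''; split => //; apply: delta_sc => A A0 AT.
have h1 := sum_step A HD; have h2 := X_delta D'' A; have h3 := X_delta D A.
have h4 := sc_delta sc A0 AT.
case bA: (b \in A); case aA: (a \in A); rewrite bA aA /= in h1; try lia.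
have := H A bA (negbT aA); lia.
Qed.

Lemma exchange D D' a : strongly_connected ends D -> strongly_connected ends D' ->
  indeg ends D' a < indeg ends D a ->
  exists b, indeg ends D b < indeg ends D' b /\
    exists D'', strongly_connected ends D'' /\
      forall v, indeg ends D'' v + (v == a) = indeg ends D v + (v == b).
Proof.
move=> sc sc' ya.
set x := indeg ends D; set y := indeg ends D'.
case: (boolP [exists b, (x b < y b) &&
   [forall A : {set V}, ((b \in A) && (a \notin A)) ==> (1 < delta D A)]]).
  case/existsP => b /andP [lt /forallP H]; exists b; split => //.
  apply: step_sc => // A bA aA; exact: (implyP (H A) (introT andP (conj bA aA))).
rewrite negb_exists => /forallP Hn; exfalso.
pose P := fun A : {set V} => (a \notin A) && (A != set0) && (delta D A <= 1).
pose F := [set A | maxset P A].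
have Pmax : forall b, x b < y b -> b \in cover F.
  move=> b lt; have := Hn b; rewrite lt /= negb_forall => /existsP [A].
  rewrite negb_imply -leqNgt => /andP [/andP [bA aA] dA].
  have PA : P A by rewrite /P aA dA andbT; apply/set0Pn; exists b.
  have [M maxM sub] := maxset_exists PA.
  apply/bigcupP; exists M; first by rewrite inE.
  exact: (subsetP sub).
have triv : trivIset F.
  apply/trivIsetP => A1 A2; rewrite !inE => m1 m2 neq.
  rewrite -setI_eq0; apply: contraR neq => h.
  have := maxsetp m1; have := maxsetp m2; rewrite /P.
  case/andP => [/andP [a2 n2] d2]; case/andP => [/andP [a1 n1] d1].
  have PU : P (A1 :|: A2).
    rewrite /P !inE negb_or a1 a2 /=; apply/andP; split.
      by apply: contraNneq n1 => /setP h1; apply/eqP/setP => v; move: (h1 v); rewrite !inE; case: (v \in A1).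
    have ds := delta_sub D A1 A2.
    have IT : A1 :&: A2 != setT.
      apply/negP => /eqP h2; have : a \in A1 :&: A2 by rewrite h2 inE.
      by rewrite inE (negbTE a1).
    have := @sc_delta D (A1 :&: A2) sc h IT.
    lia.
  have e1 := maxsetsup m1 PU (subsetUl A1 A2).
  have e2 := maxsetsup m2 PU (subsetUr A1 A2).
  by apply/eqP; rewrite -{1}e1 e2.
have sumF : \sum_(v in cover F) y v <= \sum_(v in cover F) x v.
  rewrite !big_trivIset //; apply: leq_sum => A; rewrite inE => mA.
  have := maxsetp mA; rewrite /P; case/andP => [/andP [aA nA] dA].
  have AT : A != setT by apply: contraNneq aA => ->; rewrite inE.
  have := X_delta D A; have := X_delta D' A; have := sc_delta sc' nA AT.
  move=> h1 h2 h3; change (X D' A <= X D A). rewrite /X in h2 h3 *. lia.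
have aC : a \notin cover F.
  apply/bigcupP => [[A]]; rewrite inE => mA aA.
  by have := maxsetp mA; rewrite /P aA.
have sumC : \sum_(v | v \notin cover F) y v < \sum_(v | v \notin cover F) x v.
  rewrite (bigD1 a) // [in X in _ < X](bigD1 a) //=.
  have : \sum_(v | (v \notin cover F) && (v != a)) y v <=
         \sum_(v | (v \notin cover F) && (v != a)) x v.
    apply: leq_sum => v /andP [vC _]; rewrite leqNgt; apply: contra vC; exact: Pmax.
  move: ya; rewrite -/x -/y; lia.
have tot := X_setT D D'; rewrite /X in tot.
have : \sum_(v in setT) y v < \sum_(v in setT) x v.
  rewrite (bigID (mem (cover F))) [in X in _ < X](bigID (mem (cover F))) /=.
  have e : forall f : V -> nat, \sum_(i in setT | i \in cover F) f i = \sum_(i in cover F) f i.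
    by move=> f; apply: eq_bigl => i; rewrite inE.
  have e' : forall f : V -> nat, \sum_(i in setT | i \notin cover F) f i = \sum_(i | i \notin cover F) f i.
    by move=> f; apply: eq_bigl => i; rewrite inE.
  rewrite !e !e'; lia.
move: tot; rewrite -/x -/y. by move=> ->; rewrite ltnn.
Qed.

Lemma count_enum_card (p : pred V) : count p (enum V) = #|[set x | p x]|.
Proof. rewrite -sum1_count big_enum_cond -sum1_card; apply: eq_bigl => x; by rewrite !inE. Qed.

Lemma count_dec D j : count (leq j) (dec_vec ends D) = #|[set v | j <= indeg ends D v]|.
Proof. by rewrite /dec_vec count_sort count_map count_enum_card. Qed.

Lemma count_inc D j : count (geq j) (inc_vec ends D) = #|[set v | indeg ends D v <= j]|.
Proof. by rewrite /inc_vec count_sort count_map count_enum_card. Qed.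

Definition nostep D := forall a b D'', strongly_connected ends D'' ->
  (forall v, indeg ends D'' v + (v == a) = indeg ends D v + (v == b)) ->
  indeg ends D a <= indeg ends D b + 1.

Lemma step_val D D'' a b : a != b ->
  (forall v, indeg ends D'' v + (v == a) = indeg ends D v + (v == b)) ->
  [/\ indeg ends D'' a + 1 = indeg ends D a, indeg ends D'' b = indeg ends D b + 1 &
      forall v, v != a -> v != b -> indeg ends D'' v = indeg ends D v].
Proof.
move=> ab H; split.
- have := H a; rewrite eqxx (negbTE ab) /=; lia.
- have := H b; rewrite eqxx eq_sym (negbTE ab) /=; lia.
- move=> v va vb; have := H v; rewrite (negbTE va) (negbTE vb) /=; lia.
Qed.

Lemma total_geq : total geq.
Proof. move=> m n; exact: leq_total n m. Qed.

Lemma decmin_nostep D : dec_min_sc ends D -> nostep D.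
Proof.
move=> [sc H] a b D'' sc'' R; rewrite leqNgt; apply/negP => lt.
have ab : a != b by apply: contraTneq lt => ->; lia.
have [Ra Rb Rv] := step_val ab R.
have := H D'' sc''; apply/negP/negPn.
apply: (@count_lex_dec _ _ (indeg ends D a)).
- exact: sort_sorted total_geq _.
- exact: sort_sorted total_geq _.
- by rewrite /dec_vec !size_sort !size_map.
- move=> j' jj'; rewrite !count_dec; apply: eq_card => v; rewrite !inE.
  case: (eqVneq v a) => [->|va]; first by lia.
  case: (eqVneq v b) => [->|vb]; first by lia.
  by rewrite Rv.
- rewrite !count_dec; apply: proper_card; apply/properP; split.
    apply/subsetP => v; rewrite !inE.
    case: (eqVneq v a) => [->|va]; first by lia.
    case: (eqVneq v b) => [->|vb]; first by lia.
    by rewrite Rv.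
  by exists a; rewrite !inE; lia.
Qed.

Lemma incmax_nostep D : inc_max_sc ends D -> nostep D.
Proof.
move=> [sc H] a b D'' sc'' R; rewrite leqNgt; apply/negP => lt.
have ab : a != b by apply: contraTneq lt => ->; lia.
have [Ra Rb Rv] := step_val ab R.
have := H D'' sc''; apply/negP/negPn.
apply: (@count_lex_inc _ _ (indeg ends D b)).
- exact: sort_sorted leq_total _.
- exact: sort_sorted leq_total _.
- by rewrite /inc_vec !size_sort !size_map.
- move=> j' jj'; rewrite !count_inc; apply: eq_card => v; rewrite !inE.
  case: (eqVneq v a) => [->|va]; first by lia.
  case: (eqVneq v b) => [->|vb]; first by lia.
  by rewrite Rv.
- rewrite !count_inc; apply: proper_card; apply/properP; split.
    apply/subsetP => v; rewrite !inE.
    case: (eqVneq v a) => [->|va]; first by lia.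
    case: (eqVneq v b) => [->|vb]; first by lia.
    by rewrite Rv.
  by exists b; rewrite !inE; lia.
Qed.

Definition dist D D' := \sum_v ((indeg ends D v - indeg ends D' v) + (indeg ends D' v - indeg ends D v)).

Lemma sum_eq1 (c : V) : \sum_v (v == c) = 1.
Proof. rewrite (bigD1 c) //= eqxx big1 // => v /negbTE ->; by []. Qed.

Lemma perm_tperm (f : V -> nat) (a b : V) :
  perm_eq (map (fun v => f (tperm a b v)) (enum V)) (map f (enum V)).
Proof.
rewrite (map_comp f (tperm a b)); apply: perm_map.
apply: uniq_perm; first by rewrite map_inj_uniq ?enum_uniq //; exact: perm_inj.
  exact: enum_uniq.
move=> v; rewrite mem_enum; apply/mapP; exists (tperm a b v); first by rewrite mem_enum.
by rewrite tpermK.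
Qed.

Lemma main_gen (Q : orientation E -> Prop) :
  (forall D, Q D -> nostep D) ->
  (forall D D'', Q D -> strongly_connected ends D'' ->
     perm_eq (map (indeg ends D'') (enum V)) (map (indeg ends D) (enum V)) -> Q D'') ->
  forall n D D', strongly_connected ends D -> nostep D -> strongly_connected ends D' -> Q D' ->
   dist D D' < n -> perm_eq (map (indeg ends D) (enum V)) (map (indeg ends D') (enum V)).
Proof.
move=> Q1 Q2; elim => // n IH D D' sc ns sc' qD' dn.
have tot := X_setT D D'; rewrite /X in tot.
case: (boolP [exists v, indeg ends D' v < indeg ends D v]); last first.
  rewrite negb_exists => /forallP Hle.
  suff H : forall v, indeg ends D v = indeg ends D' v by rewrite (eq_map H).
  move=> v; apply/eqP; rewrite eqn_leq; have := Hle v; rewrite -leqNgt => -> /=.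
  rewrite leqNgt; apply/negP => lt.
  have : \sum_(v in setT) indeg ends D v < \sum_(v in setT) indeg ends D' v.
    rewrite (bigD1 v) ?inE // [in X in _ < X](bigD1 v) ?inE //=.
    have : \sum_(i in setT | i != v) indeg ends D i <= \sum_(i in setT | i != v) indeg ends D' i.
      by apply: leq_sum => i _; have := Hle i; rewrite -leqNgt.
    lia.
  by rewrite tot ltnn.
case/existsP => a0 pa0.
case: (@arg_maxnP V a0 (fun v => indeg ends D' v < indeg ends D v) (fun v => indeg ends D v) pa0) => a pa amax.
have [b [xb [D2 [sc2 R2]]]] := exchange sc sc' pa.
have hab := ns _ _ _ sc2 R2.
have [a' [ya' [D3 [sc3 R3]]]] := exchange sc' sc xb.
have hba := Q1 _ qD' _ _ _ sc3 R3.
have ama := amax a' ya'.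
have ba : b != a' by apply: contraTneq xb => ->; lia.
have [Rb Ra Rv] := step_val ba R3.
have H3 : forall v, indeg ends D3 v = indeg ends D' (tperm a' b v).
  move=> v; case: (eqVneq v a') => [->|va]; first by rewrite tpermL; lia.
  case: (eqVneq v b) => [->|vb]; first by rewrite tpermR; lia.
  by rewrite tpermD 1?eq_sym // Rv.
have P3 : perm_eq (map (indeg ends D3) (enum V)) (map (indeg ends D') (enum V)).
  by rewrite (eq_map H3); apply: perm_tperm.
have q3 := Q2 _ _ qD' sc3 P3.
have d3 : dist D D3 + 2 = dist D D'.
  suff : dist D D3 + \sum_v (v == a') + \sum_v (v == b) = dist D D'.
    by rewrite !sum_eq1 -addnA.
  rewrite /dist -!big_split /=; apply: eq_bigr => v _.
  case: (eqVneq v a') => [->|va].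
    rewrite eq_sym (negbTE ba); lia.
  case: (eqVneq v b) => [->|vb]; first by lia.
  by rewrite (Rv v) //; lia.
apply: perm_trans (IH D D3 sc ns sc3 q3 _) P3.
lia.
Qed.

Definition scb D := [forall u, forall v, connect (Defs.arc ends D) u v].

Lemma scbP D : reflect (strongly_connected ends D) (scb D).
Proof.
apply: (iffP forallP) => [H u v | H u]; first by have /forallP := H u.
by apply/forallP => v.
Qed.

Lemma exists_opt (r : rel (seq nat)) (f : orientation E -> seq nat) :
  (forall s, ~~ r s s) -> (forall s t u, r s t -> r t u -> r s u) ->
  forall D, strongly_connected ends D ->
  exists D0, strongly_connected ends D0 /\
    forall D', strongly_connected ends D' -> ~~ r (f D0) (f D').
Proof.
move=> irr tr D sc.
suff : forall n D, scb D -> #|[set D' | scb D' && r (f D) (f D')]| < n ->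
  exists D0, strongly_connected ends D0 /\
    forall D', strongly_connected ends D' -> ~~ r (f D0) (f D').
  by apply => //; apply/scbP.
elim => // n IH D1 sc1 lt.
case: (eqVneq [set D' | scb D' && r (f D1) (f D')] set0) => [e|/set0Pn [D2]].
  exists D1; split; first by apply/scbP.
  move=> D' /scbP sc'; apply/negP => rr.
  have : D' \in [set D' | scb D' && r (f D1) (f D')] by rewrite inE sc' rr.
  by rewrite e inE.
rewrite inE => /andP [sc2 r12].
apply: (IH D2 sc2); rewrite -ltnS; apply: leq_trans _ lt; rewrite ltnS; apply: proper_card; apply/properP; split.
  apply/subsetP => D'; rewrite !inE => /andP [-> r2] /=; exact: tr r12 r2.
by exists D2; rewrite !inE sc2 ?irr ?r12.
Qed.

Lemma geq_anti : antisymmetric geq.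
Proof. by move=> m n /andP [h1 h2]; apply/eqP; rewrite eqn_leq; apply/andP; split. Qed.

Lemma geq_trans : transitive geq.
Proof. by move=> a b c /= h1 h2; apply: leq_trans h1. Qed.

Lemma dec_perm D D'' :
  perm_eq (map (indeg ends D'') (enum V)) (map (indeg ends D) (enum V)) ->
  dec_vec ends D'' = dec_vec ends D.
Proof. by move/(perm_sortP total_geq geq_trans geq_anti). Qed.

Lemma inc_perm D D'' :
  perm_eq (map (indeg ends D'') (enum V)) (map (indeg ends D) (enum V)) ->
  inc_vec ends D'' = inc_vec ends D.
Proof. by move/(perm_sortP leq_total leq_trans anti_leq). Qed.

End Aux.

Theorem corollary6p4 (V E : finType) (ends : E -> V * V) :
  (exists D : orientation E, strongly_connected ends D) ->
  forall D : orientation E, strongly_connected ends D ->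
    (dec_min_sc ends D <-> inc_max_sc ends D).
Proof.
move=> _ D sc; split => opt.
- have [W [scW HW]] := @exists_opt V E ends lexlt (inc_vec ends) lexlt_irr lexlt_trans D sc.
  have incW : inc_max_sc ends W by [].
  have Q2 : forall D1 D2, inc_max_sc ends D1 -> strongly_connected ends D2 ->
     perm_eq (map (indeg ends D2) (enum V)) (map (indeg ends D1) (enum V)) ->
     inc_max_sc ends D2.
    move=> D1 D2 [_ H1] sc2 pe; split => // D' sc'; rewrite (inc_perm pe); exact: H1.
  have pe := @main_gen V E ends (inc_max_sc ends) (@incmax_nostep V E ends) Q2
    (dist ends D W).+1 D W sc (decmin_nostep opt) scW incW (ltnSn _).
  split => // D' sc'; rewrite (inc_perm pe); exact: HW.
- have [W [scW HW]] := @exists_opt V E ends (fun s t => lexlt t s) (dec_vec ends)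
     lexlt_irr (fun s t u h1 h2 => lexlt_trans h2 h1) D sc.
  have decW : dec_min_sc ends W by [].
  have Q2 : forall D1 D2, dec_min_sc ends D1 -> strongly_connected ends D2 ->
     perm_eq (map (indeg ends D2) (enum V)) (map (indeg ends D1) (enum V)) ->
     dec_min_sc ends D2.
    move=> D1 D2 [_ H1] sc2 pe; split => // D' sc'; rewrite (dec_perm pe); exact: H1.
  have pe := @main_gen V E ends (dec_min_sc ends) (@decmin_nostep V E ends) Q2
    (dist ends D W).+1 D W sc (incmax_nostep opt) scW decW (ltnSn _).
  split => // D' sc'; rewrite (dec_perm pe); exact: HW.
Qed.
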